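(* Let $a:[0,\infty)\times\mathcal T\to[0,\infty)$ be convex in its first argument with $\lim_{x\uparrow\infty}a(x,t_n)/x<R<\infty$ for each $n$. Suppose the reals $e^1_{j,n},e^2_{j,n},v_{j,n}$ ($0\le j\le J+1$, $1\le n\le N$), $d^1_{j,n},d^2_{j,n}$ ($0\le j\le J+1$, $1\le n\le N-1$) satisfy the feasibility conditions of $\mathbf L_H^{\mathcal X,\infty,\mathcal T}$. For each $n$ let $\bar e^1_n,\bar e^2_n,\bar v_n$ be the extended linear interpolations of $(e^1_{j,n})_{0\le j\le J+1}$, $(e^2_{j,n})_{0\le j\le J+1}$, $(v_{j,n})_{0\le j\le J+1}$, let $\tilde d^\delta_n$ be the mixed interpolation on $[0,x_J]$ and for $x>x_J$ set $\tilde d^1_n(x)=\min\{d^1_{J,n},e^1_{J+1,n}\}$ and $\tilde d^2_n(x)=\min\{d^2_{J,n},e^1_{J+1,n}-v_{J+1,n}\}$. Set also $\bar e^1_N\equiv0\equiv\bar e^2_1$. Then \[\bar v_n(x)\ge a(x,t_n)\quad (x\ge0,\ 1\le n\le N),\] \[\bar e^1_n(x)+\bar e^2_{n+1}(y)+(y-x)\tilde d^1_n(x)\ge0\quad(x,y\ge0,\ 1\le n<N),\] \[\bar e^1_n(x)+\bar e^2_{n+1}(y)+(y-x)\tilde d^2_n(x)-\bar v_n(x)+\bar v_{n+1}(y)\ge0\quad(x,y\ge0,\ 1\le n<N).\]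
   Context: Fix $N\ge1$, $J\ge1$, times $0=t_0<t_1<\dots<t_N=T$, $\mathcal T=\{t_1,\dots,t_N\}$, strikes $0=x_0<x_1<\dots<x_J$, and nonnegative numbers $\hat p_{j,n}$ ($0\le j\le J+1$, $1\le n\le N$). Write $\ell_n=\lim_{x\uparrow\infty}a(x,t_n)/x$. $\mathbf L_H^{\mathcal X,\infty,\mathcal T}$: over reals $e^1_{j,n},e^2_{j,n},v_{j,n}$ ($0\le j\le J+1$, $1\le n\le N$), $d^1_{j,n},d^2_{j,n}$ ($0\le j\le J+1$, $1\le n\le N-1$), with $e^1_{j,N}=e^2_{j,1}=0$ for all $j$, minimise $\sum_{n}\sum_{j=0}^{J+1}(e^1_{j,n}+e^2_{j,n})\hat p_{j,n}+\sum_{j=0}^{J+1}v_{j,N}\hat p_{j,N}$ subject to $v_{j,n}\ge0$ and, for $1\le n\le N$ in (i) and $1\le n\le N-1$ in (ii),(iii): (i) $v_{j,n}\ge a(x_j,t_n)$ for $0\le j\le J$, and $v_{J+1,n}\ge\ell_n$; (ii) $e^1_{j,n}+e^2_{k,n+1}+(x_k-x_j)d^1_{j,n}\ge0$ ($0\le j,k\le J$); $e^1_{J+1,n}-d^1_{J+1,n}\ge0$; $e^2_{J+1,n+1}+d^1_{j,n}\ge0$ ($0\le j\le J$); $e^1_{J+1,n}+e^2_{J+1,n+1}\ge0$; (iii) $e^1_{j,n}+e^2_{k,n+1}+(x_k-x_j)d^2_{j,n}-v_{j,n}+v_{k,n+1}\ge0$ ($0\le j,k\le J$); $e^1_{J+1,n}-d^2_{J+1,n}-v_{J+1,n}\ge0$;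 $e^2_{J+1,n+1}+d^2_{j,n}+v_{J+1,n+1}\ge0$ ($0\le j\le J$); $e^1_{J+1,n}+e^2_{J+1,n+1}-v_{J+1,n}+v_{J+1,n+1}\ge0$. Extended linear interpolation of $(h_0,\dots,h_{J+1})$: $\bar h(x_j)=h_j$; $\bar h(x)=\frac{x_{j+1}-x}{x_{j+1}-x_j}h_j+\frac{x-x_j}{x_{j+1}-x_j}h_{j+1}$ for $x_j<x<x_{j+1}$, $j<J$; $\bar h(x)=h_J+(x-x_J)h_{J+1}$ for $x>x_J$. Mixed interpolation on $[0,x_J]$ ($\delta\in\{1,2\}$, $1\le n\le N-1$): with $u^1_{j,n}=\frac{e^1_{j+1,n}-e^1_{j,n}}{x_{j+1}-x_j}$, $u^2_{j,n}=\frac{(e^1_{j+1,n}-v_{j+1,n})-(e^1_{j,n}-v_{j,n})}{x_{j+1}-x_j}$ ($0\le j<J$), set $\tilde d^\delta_n(x_j)=d^\delta_{j,n}$ and for $x\in(x_j,x_{j+1})$: $\tilde d^\delta_n(x)=d^\delta_{j,n}$ if $d^\delta_{j,n}\le u^\delta_{j,n}$; $=d^\delta_{j+1,n}$ if $d^\delta_{j,n}>u^\delta_{j,n}$ and $d^\delta_{j+1,n}\ge u^\delta_{j,n}$; $=u^\delta_{j,n}$ if $d^\delta_{j+1,n}<u^\delta_{j,n}<d^\delta_{j,n}$. *)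

(* Defs.v *)
From Stdlib Require Import Reals Lra Lia.
From Coquelicot Require Import Coquelicot.
Open Scope R_scope.

(* Generic piecewise function on the grid xs 0 < xs 1 < ... < xs J:
   value pt j at the grid point xs j (j <= J),
   value mid j y for xs j < y < xs (j+1) (j < J),
   value tail y for y > xs J.
   (Arguments y < 0 = xs 0 are irrelevant.)  Called with k = J. *)
Fixpoint piecewise (xs : nat -> R) (pt : nat -> R) (mid : nat -> R -> R)
  (tail : R -> R) (J k : nat) (y : R) : R :=
  match k with
  | O => if Req_EM_T y (xs J) then pt J else tail y
  | S k' =>
      let j := (J - k)%nat in
      if Req_EM_T y (xs j) then pt j
      else if Rlt_dec y (xs (S j)) then mid j y
      else piecewise xs pt mid tail J k' y
  end.

Definition ext_interp (xs : nat -> R) (J : nat) (h : nat -> R) (y : R) : R :=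
  piecewise xs h
    (fun j y => (xs (S j) - y) / (xs (S j) - xs j) * h j
              + (y - xs j) / (xs (S j) - xs j) * h (S j))
    (fun y => h J + (y - xs J) * h (S J)) J J y.

(* Mixed interpolation of the slopes d (j = 0..J) against the function g
   (g = e^1_{.,n} for delta = 1, g = e^1_{.,n} - v_{.,n} for delta = 2),
   with constant value c for y > xs J. *)
Definition mixed_interp (xs : nat -> R) (J : nat) (d g : nat -> R) (c : R)
  (y : R) : R :=
  piecewise xs d
    (fun j _ =>
       let u := (g (S j) - g j) / (xs (S j) - xs j) in
       if Rle_dec (d j) u then d j
       else if Rle_dec u (d (S j)) then d (S j)
       else u)
    (fun _ => c) J J y.

(* Feasibility for L_H^{X,infty,T}; variables indexed (j, n).
   a_n x stands for a(x, t_n); ell n for lim_{x -> oo} a(x,t_n)/x. *)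
Definition feasible (N J : nat) (xs : nat -> R) (a_n : nat -> R -> R)
  (ell : nat -> R) (e1 e2 v d1 d2 : nat -> nat -> R) : Prop :=
  (forall j, (j <= S J)%nat -> e1 j N = 0 /\ e2 j 1%nat = 0) /\
  (forall j n, (j <= S J)%nat -> (1 <= n <= N)%nat -> 0 <= v j n) /\
  (forall n, (1 <= n <= N)%nat ->
     (forall j, (j <= J)%nat -> v j n >= a_n n (xs j)) /\ v (S J) n >= ell n) /\
  (forall n, (1 <= n <= N - 1)%nat ->
     (forall j k, (j <= J)%nat -> (k <= J)%nat ->
        e1 j n + e2 k (S n) + (xs k - xs j) * d1 j n >= 0) /\
     e1 (S J) n - d1 (S J) n >= 0 /\
     (forall j, (j <= J)%nat -> e2 (S J) (S n) + d1 j n >= 0) /\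
     e1 (S J) n + e2 (S J) (S n) >= 0) /\
  (forall n, (1 <= n <= N - 1)%nat ->
     (forall j k, (j <= J)%nat -> (k <= J)%nat ->
        e1 j n + e2 k (S n) + (xs k - xs j) * d2 j n - v j n + v k (S n) >= 0) /\
     e1 (S J) n - d2 (S J) n - v (S J) n >= 0 /\
     (forall j, (j <= J)%nat -> e2 (S J) (S n) + d2 j n + v (S J) (S n) >= 0) /\
     e1 (S J) n + e2 (S J) (S n) - v (S J) n + v (S J) (S n) >= 0).

(* Main.v *)
Require Import Defs.
From Stdlib Require Import Reals Lra Lia.
From Coquelicot Require Import Coquelicot.
Open Scope R_scope.

Lemma loc_gen (xs : nat -> R) (J : nat) (x : R) : forall k, (k <= J)%nat -> xs (J - k)%nat <= x ->
  (exists j, (j <= J)%nat /\ x = xs j /\ forall pt mid tail, piecewise xs pt mid tail J k x = pt j) \/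
  (exists j, (j < J)%nat /\ xs j < x < xs (S j) /\ forall pt mid tail, piecewise xs pt mid tail J k x = mid j x) \/
  (xs J < x /\ forall pt mid tail, piecewise xs pt mid tail J k x = tail x).
Proof.
  induction k as [|k IH]; intros Hk Hx.
  - rewrite Nat.sub_0_r in Hx.
    destruct (Req_EM_T x (xs J)) as [e|ne].
    + left. exists J. split; [lia|]. split; [exact e|]. intros. simpl.
      destruct (Req_EM_T x (xs J)); [reflexivity|contradiction].
    + right; right. split; [lra|]. intros; simpl.
      destruct (Req_EM_T x (xs J)); [contradiction|reflexivity].
  - destruct (Req_EM_T x (xs (J - S k)%nat)) as [e|ne].
    + left. exists (J - S k)%nat. split; [lia|]. split; [exact e|]. intros. simpl.
      destruct (Req_EM_T x (xs (J - S k)%nat)); [reflexivity|contradiction].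
    + destruct (Rlt_dec x (xs (S (J - S k)))) as [l|nl].
      * right; left. exists (J - S k)%nat. split; [lia|]. split; [lra|]. intros; simpl.
        destruct (Req_EM_T x (xs (J - S k)%nat)); [contradiction|].
        destruct (Rlt_dec x (xs (S (J - S k)))); [reflexivity|contradiction].
      * assert (E : S (J - S k) = (J - k)%nat) by lia.
        destruct (IH ltac:(lia) ltac:(rewrite <- E; lra)) as [[j [h1 [h2 h3]]]|[[j [h1 [h2 h3]]]|[h1 h3]]].
        -- left. exists j. split; [exact h1|]. split; [exact h2|]. intros pt mid tail. rewrite <- (h3 pt mid tail). simpl.
           destruct (Req_EM_T x (xs (J - S k)%nat)); [contradiction|].
           destruct (Rlt_dec x (xs (S (J - S k)))); [contradiction|reflexivity].
        -- right; left. exists j. split; [exact h1|]. split; [exact h2|]. intros pt mid tail. rewrite <- (h3 pt mid tail). simpl.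
           destruct (Req_EM_T x (xs (J - S k)%nat)); [contradiction|].
           destruct (Rlt_dec x (xs (S (J - S k)))); [contradiction|reflexivity].
        -- right; right. split; [exact h1|]. intros pt mid tail. rewrite <- (h3 pt mid tail). simpl.
           destruct (Req_EM_T x (xs (J - S k)%nat)); [contradiction|].
           destruct (Rlt_dec x (xs (S (J - S k)))); [contradiction|reflexivity].
Qed.

Lemma loc (xs : nat -> R) (J : nat) (x : R) : xs 0%nat <= x ->
  (exists j, (j <= J)%nat /\ x = xs j /\ forall pt mid tail, piecewise xs pt mid tail J J x = pt j) \/
  (exists j, (j < J)%nat /\ xs j < x < xs (S j) /\ forall pt mid tail, piecewise xs pt mid tail J J x = mid j x) \/
  (xs J < x /\ forall pt mid tail, piecewise xs pt mid tail J J x = tail x).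
Proof. intros H. apply loc_gen; [lia|]. rewrite Nat.sub_diag. exact H. Qed.

Lemma xs_mono (xs : nat -> R) (J : nat) : (forall j, (j < J)%nat -> xs j < xs (S j)) ->
  forall i j, (i <= j)%nat -> (j <= J)%nat -> xs i <= xs j.
Proof.
  intros H i j Hij. induction Hij; intros HJ; [lra|].
  specialize (IHHij ltac:(lia)). specialize (H m ltac:(lia)). lra.
Qed.

Lemma ext_lin (xs : nat -> R) J f g c x : xs 0%nat <= x ->
  ext_interp xs J (fun j => f j + c * g j) x = ext_interp xs J f x + c * ext_interp xs J g x.
Proof.
  intros H. unfold ext_interp.
  destruct (loc xs J x H) as [[j [_ [_ h]]]|[[j [_ [_ h]]]|[_ h]]]; rewrite !h; ring.
Qed.

Lemma key (J : nat) (xs G H d : nat -> R) :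
  xs 0%nat = 0 -> (forall j, (j < J)%nat -> xs j < xs (S j)) ->
  (forall j k, (j <= J)%nat -> (k <= J)%nat -> G j + H k + (xs k - xs j) * d j >= 0) ->
  (forall j, (j <= J)%nat -> H (S J) + d j >= 0) ->
  G (S J) + H (S J) >= 0 ->
  forall x y, 0 <= x -> 0 <= y ->
  ext_interp xs J G x + ext_interp xs J H y
    + (y - x) * mixed_interp xs J d G (Rmin (d J) (G (S J))) x >= 0.
Proof.
  intros H0 Hinc HA HB HC x y Hx Hy.
  assert (Mo := xs_mono xs J Hinc).
  set (P := ext_interp xs J G x).
  set (D := mixed_interp xs J d G (Rmin (d J) (G (S J))) x).
  assert (Ha : forall k, (k <= J)%nat -> P + H k + (xs k - x) * D >= 0
          /\ H (S J) + D >= 0).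
  { intros k Hk. subst P D. unfold ext_interp, mixed_interp.
    destruct (loc xs J x ltac:(lra)) as [[j [hj [hx h]]]|[[j [hj [hx h]]]|[hx h]]]; rewrite !h.
    - subst x. split; [apply HA; lia | apply HB; lia].
    - cbv beta zeta.
      set (a0 := xs j) in *. set (b0 := xs (S j)) in *.
      set (u := (G (S j) - G j) / (b0 - a0)).
      assert (Eu : G (S j) = G j + u * (b0 - a0)) by (unfold u; field; lra).
      replace ((b0 - x) / (b0 - a0) * G j + (x - a0) / (b0 - a0) * G (S j))
        with (G j + u * (x - a0)) by (rewrite Eu; field; lra).
      assert (A1 := HA j k ltac:(lia) Hk). assert (A2 := HA (S j) k ltac:(lia) Hk).
      assert (B1 := HB j ltac:(lia)). assert (B2 := HB (S j) ltac:(lia)).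
      fold a0 in A1. fold b0 in A2.
      destruct (Rle_dec (d j) u) as [c1|c1].
      + split; [|lra].
        assert (0 <= (x - a0) * (u - d j)) by (apply Rmult_le_pos; lra). nra.
      + destruct (Rle_dec u (d (S j))) as [c2|c2].
        * split; [|lra].
          assert (0 <= (b0 - x) * (d (S j) - u)) by (apply Rmult_le_pos; lra). nra.
        * split; [|lra].
          destruct (Compare_dec.le_lt_dec k j) as [kj|kj].
          -- assert (xs k <= a0) by (apply Mo; lia).
             assert (0 <= (a0 - xs k) * (d j - u)) by (apply Rmult_le_pos; lra). nra.
          -- assert (b0 <= xs k) by (apply Mo; lia).
             assert (0 <= (xs k - b0) * (u - d (S j))) by (apply Rmult_le_pos; lra). nra.
    - assert (A1 := HA J k ltac:(lia) Hk). assert (B1 := HB J ltac:(lia)).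
      assert (xs k <= xs J) by (apply Mo; lia).
      assert (Rmin (d J) (G (S J)) <= d J) by apply Rmin_l.
      assert (Rmin (d J) (G (S J)) <= G (S J)) by apply Rmin_r.
      split.
      + assert (0 <= (xs J - xs k) * (d J - Rmin (d J) (G (S J)))) by (apply Rmult_le_pos; lra).
        assert (0 <= (x - xs J) * (G (S J) - Rmin (d J) (G (S J)))) by (apply Rmult_le_pos; lra).
        nra.
      + unfold Rmin; destruct (Rle_dec (d J) (G (S J))); lra. }
  unfold ext_interp.
  destruct (loc xs J y ltac:(lra)) as [[k [hk [hy h]]]|[[k [hk [hy h]]]|[hy h]]]; rewrite !h.
  - subst y. apply Ha; lia.
  - destruct (Ha k ltac:(lia)) as [A1 _]. destruct (Ha (S k) ltac:(lia)) as [A2 _].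
    set (a0 := xs k) in *. set (b0 := xs (S k)) in *.
    replace (P + ((b0 - y) / (b0 - a0) * H k + (y - a0) / (b0 - a0) * H (S k)) + (y - x) * D)
      with (((b0 - y) * (P + H k + (a0 - x) * D) + (y - a0) * (P + H (S k) + (b0 - x) * D)) / (b0 - a0))
      by (field; lra).
    apply Rle_ge. apply Rdiv_le_0_compat; [|lra].
    assert (0 <= (b0 - y) * (P + H k + (a0 - x) * D)) by (apply Rmult_le_pos; lra).
    assert (0 <= (y - a0) * (P + H (S k) + (b0 - x) * D)) by (apply Rmult_le_pos; lra).
    lra.
  - destruct (Ha J ltac:(lia)) as [A1 B1].
    assert (0 <= (y - xs J) * (H (S J) + D)) by (apply Rmult_le_pos; lra). nra.
Qed.

Lemma conv_tail (f : R -> R) (l c x : R) :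
  (forall x y lam, 0 <= x -> 0 <= y -> 0 <= lam <= 1 ->
     f (lam * x + (1 - lam) * y) <= lam * f x + (1 - lam) * f y) ->
  is_lim (fun x => f x / x) p_infty l ->
  0 <= c -> c < x -> f x <= f c + (x - c) * l.
Proof.
  intros Hc Hl H0 Hcx.
  destruct (Rle_dec (f x) (f c + (x - c) * l)) as [ok|nok]; [exact ok|exfalso].
  set (s := (f x - f c) / (x - c)).
  assert (Es : f x = f c + s * (x - c)) by (unfold s; field; lra).
  assert (Hsl : l < s).
  { apply Rnot_le_lt in nok. apply Rnot_le_lt. intro. 
    assert ((x - c) * s <= (x - c) * l) by (apply Rmult_le_compat_l; lra). nra. }
  set (eps := (s - l) / 2).
  assert (Heps : 0 < eps) by (unfold eps; lra).
  apply is_lim_spec in Hl. specialize (Hl (mkposreal eps Heps)).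
  destruct Hl as [M HM]. simpl in HM.
  set (y := Rmax (Rmax (M + 1) (x + 1)) (Rabs (f c - c * s) / eps + 1)).
  assert (y1 : M < y) by (unfold y; eapply Rlt_le_trans; [|apply Rmax_l];
     eapply Rlt_le_trans; [|apply Rmax_l]; lra).
  assert (y2 : x < y) by (unfold y; eapply Rlt_le_trans; [|apply Rmax_l];
     eapply Rlt_le_trans; [|apply Rmax_r]; lra).
  assert (y3 : Rabs (f c - c * s) / eps < y) by (unfold y; eapply Rlt_le_trans; [|apply Rmax_r]; lra).
  assert (Hy := HM y y1).
  (* convexity: x between c and y *)
  set (lam := (y - x) / (y - c)).
  assert (E1 : 1 - lam = (x - c) / (y - c)) by (unfold lam; field; lra).
  assert (Hlam1 : 0 < (x - c) / (y - c)) by (apply Rdiv_lt_0_compat; lra).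
  assert (Hlam : 0 <= lam <= 1).
  { split; [unfold lam; apply Rdiv_le_0_compat; lra | lra]. }
  assert (Hcv := Hc c y lam H0 ltac:(lra) Hlam).
  replace (lam * c + (1 - lam) * y) with x in Hcv by (unfold lam; field; lra).
  assert (Hfy : f c + (y - c) * s <= f y).
  { assert (0 < 1 - lam) by lra.
    rewrite Es in Hcv.
    assert (Hq : (1 - lam) * (f c + (y - c) * s) <= (1 - lam) * f y).
    { replace ((1 - lam) * (f c + (y - c) * s)) with ((1 - lam) * f c + s * (x - c))
        by (rewrite E1; field; lra). lra. }
    apply Rmult_le_reg_l with (1 - lam); lra. }
  assert (Hy0 : 0 < y) by lra.
  assert (Hup : f y < y * (l + eps)).
  { apply Rabs_lt_between in Hy. destruct Hy as [_ Hy].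
    assert (f y / y < l + eps) by lra.
    apply (Rmult_lt_compat_l y) in H; [|lra].
    replace (y * (f y / y)) with (f y) in H by (field; lra). exact H. }
  assert (Hab : Rabs (f c - c * s) < eps * y).
  { apply (Rmult_lt_compat_l eps) in y3; [|lra].
    replace (eps * (Rabs (f c - c * s) / eps)) with (Rabs (f c - c * s)) in y3 by (field; lra).
    exact y3. }
  apply Rabs_lt_between in Hab.
  assert (eps * 2 = s - l) by (unfold eps; field).
  nra.
Qed.

Lemma ext_sub (xs : nat -> R) J f g x : xs 0%nat <= x ->
  ext_interp xs J (fun j => f j - g j) x = ext_interp xs J f x - ext_interp xs J g x.
Proof.
  intros H. unfold ext_interp.
  destruct (loc xs J x H) as [[j [_ [_ h]]]|[[j [_ [_ h]]]|[_ h]]]; rewrite !h; ring.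
Qed.
Lemma ext_add (xs : nat -> R) J f g x : xs 0%nat <= x ->
  ext_interp xs J (fun j => f j + g j) x = ext_interp xs J f x + ext_interp xs J g x.
Proof.
  intros H. unfold ext_interp.
  destruct (loc xs J x H) as [[j [_ [_ h]]]|[[j [_ [_ h]]]|[_ h]]]; rewrite !h; ring.
Qed.

Theorem mainTheorem11
  (N J : nat) (t xs : nat -> R) (a : R -> R -> R) (ell : nat -> R) (Rb : R)
  (e1 e2 v d1 d2 : nat -> nat -> R) :
  (1 <= N)%nat -> (1 <= J)%nat ->
  t 0%nat = 0 -> (forall n, (n < N)%nat -> t n < t (S n)) ->
  xs 0%nat = 0 -> (forall j, (j < J)%nat -> xs j < xs (S j)) ->
  (* a : [0,oo) x T -> [0,oo) *)
  (forall n x, (1 <= n <= N)%nat -> 0 <= x -> 0 <= a x (t n)) ->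
  (* convex in the first argument on [0,oo) *)
  (forall n x y lam, (1 <= n <= N)%nat -> 0 <= x -> 0 <= y -> 0 <= lam <= 1 ->
     a (lam * x + (1 - lam) * y) (t n)
       <= lam * a x (t n) + (1 - lam) * a y (t n)) ->
  (* ell n = lim_{x -> oo} a(x,t_n)/x, and ell n < Rb *)
  (forall n, (1 <= n <= N)%nat ->
     is_lim (fun x => a x (t n) / x) p_infty (ell n) /\ ell n < Rb) ->
  feasible N J xs (fun n x => a x (t n)) ell e1 e2 v d1 d2 ->
  let ebar1 n y := if Nat.eq_dec n N then 0 else ext_interp xs J (fun j => e1 j n) y in
  let ebar2 n y := if Nat.eq_dec n 1 then 0 else ext_interp xs J (fun j => e2 j n) y in
  let vbar n y := ext_interp xs J (fun j => v j n) y in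
  let dt1 n y := mixed_interp xs J (fun j => d1 j n) (fun j => e1 j n)
                   (Rmin (d1 J n) (e1 (S J) n)) y in
  let dt2 n y := mixed_interp xs J (fun j => d2 j n) (fun j => e1 j n - v j n)
                   (Rmin (d2 J n) (e1 (S J) n - v (S J) n)) y in
  (forall n x, (1 <= n <= N)%nat -> 0 <= x -> vbar n x >= a x (t n)) /\
  (forall n x y, (1 <= n < N)%nat -> 0 <= x -> 0 <= y ->
     ebar1 n x + ebar2 (S n) y + (y - x) * dt1 n x >= 0) /\
  (forall n x y, (1 <= n < N)%nat -> 0 <= x -> 0 <= y ->
     ebar1 n x + ebar2 (S n) y + (y - x) * dt2 n x - vbar n x + vbar (S n) y >= 0).
Proof.
  intros HN HJ Ht0 Ht Hx0 Hinc Ha0 Hconv Hlim Hf ebar1 ebar2 vbar dt1 dt2.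
  destruct Hf as [Hbd [Hv [Hi [Hii Hiii]]]].
  assert (Mo := xs_mono xs J Hinc).
  split; [|split].
  - intros n x Hn Hx. subst vbar. cbv beta. unfold ext_interp.
    destruct (Hi n Hn) as [Hi1 Hi2].
    destruct (loc xs J x ltac:(lra)) as [[j [hj [hx h]]]|[[j [hj [hx h]]]|[hx h]]]; rewrite !h.
    + subst x. apply Hi1; lia.
    + assert (0 <= xs j) by (rewrite <- Hx0; apply Mo; lia).
      set (a0 := xs j) in *. set (b0 := xs (S j)) in *.
      set (lam := (b0 - x) / (b0 - a0)).
      assert (E1 : 1 - lam = (x - a0) / (b0 - a0)) by (unfold lam; field; lra).
      assert (0 <= (x - a0) / (b0 - a0)) by (apply Rdiv_le_0_compat; lra).
      assert (0 <= lam) by (unfold lam; apply Rdiv_le_0_compat; lra).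
      rewrite <- E1.
      assert (Hcv := Hconv n a0 b0 lam Hn ltac:(lra) ltac:(lra) ltac:(lra)).
      replace (lam * a0 + (1 - lam) * b0) with x in Hcv by (unfold lam; field; lra).
      assert (A1 := Hi1 j ltac:(lia)). assert (A2 := Hi1 (S j) ltac:(lia)).
      fold a0 in A1. fold b0 in A2.
      assert (lam * a a0 (t n) <= lam * v j n) by (apply Rmult_le_compat_l; lra).
      assert ((1 - lam) * a b0 (t n) <= (1 - lam) * v (S j) n) by (apply Rmult_le_compat_l; lra).
      lra.
    + assert (0 <= xs J) by (rewrite <- Hx0; apply Mo; lia).
      destruct (Hlim n Hn) as [Hl _].
      assert (Hct := conv_tail (fun x => a x (t n)) (ell n) (xs J) x
                      (fun x y lam h1 h2 h3 => Hconv n x y lam Hn h1 h2 h3) Hl ltac:(lra) hx).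
      cbv beta in Hct.
      assert (A1 := Hi1 J ltac:(lia)).
      assert ((x - xs J) * ell n <= (x - xs J) * v (S J) n) by (apply Rmult_le_compat_l; lra).
      lra.
  - intros n x y Hn Hx Hy. subst ebar1 ebar2 dt1. cbv beta.
    destruct (Nat.eq_dec n N) as [e|_]; [lia|].
    destruct (Nat.eq_dec (S n) 1) as [e|_]; [lia|].
    destruct (Hii n ltac:(lia)) as [A [B1 [B2 B3]]].
    apply (key J xs (fun j => e1 j n) (fun j => e2 j (S n)) (fun j => d1 j n)); auto.
  - intros n x y Hn Hx Hy. subst ebar1 ebar2 dt2 vbar. cbv beta.
    destruct (Nat.eq_dec n N) as [e|_]; [lia|].
    destruct (Nat.eq_dec (S n) 1) as [e|_]; [lia|].
    destruct (Hiii n ltac:(lia)) as [A [B1 [B2 B3]]].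
    assert (K := key J xs (fun j => e1 j n - v j n) (fun j => e2 j (S n) + v j (S n))
                   (fun j => d2 j n) Hx0 Hinc
                   ltac:(intros j k hj hk; specialize (A j k hj hk); lra)
                   ltac:(intros j hj; specialize (B2 j hj); lra)
                   ltac:(lra) x y Hx Hy).
    cbv beta in K.
    rewrite ext_sub in K by lra. rewrite ext_add in K by lra.
    lra.
Qed.
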